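(* Let $\mu$ be as in the context and let $(\Phi,\Phi^\star)$ be a pair of finite Young functions with $\Phi^\star$ the Legendre transform of $\Phi$, such that $\lim_{x\to\infty}\Phi^\star(x)/x^2=\infty$ and such that $x\mapsto\Phi^\star(\sqrt{x})$ (for $x\ge0$, extended evenly) is also a Young function. Suppose that for some $r_0\in[0,\infty)$ the partial Orlicz super Poincaré inequality holds: there is a function $\beta:(r_0,\infty)\to[0,\infty)$ such that for every $r>r_0$ and every admissible $f$, \[\int f^2\,d\mu\le r\int|\nabla f|^2\,d\mu+\beta(r)\,\|f\|_\Phi^2.\] Then there is a function $\tilde\beta:(8r_0,\infty)\to[0,\infty)$ (depending only on $\beta$, $\Phi$ and $\mu$) such that for every $r>8r_0$ and every admissible $f$, \[\int f^2\,d\mu\le r\int|\nabla f|^2\,d\mu+\tilde\beta(r)\Big(\int|f|\,d\mu\Big)^2.\]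
   Context: Setting: $V:\mathbb R^n\to\mathbb R$ smooth with $\int e^{-V}dx<\infty$, $\mu(dx)=Z^{-1}e^{-V(x)}dx$ a probability measure on $\mathbb R^n$; ''admissible $f$'' means $f\in L^2(\mu)$ locally Lipschitz with $\int|\nabla f|^2d\mu<\infty$. A Young function is an even convex function $\Phi:\mathbb R\to[0,\infty)$ with $\Phi(0)=0$ and $\lim_{x\to\infty}\Phi(x)=\infty$. The Legendre transform is $\Phi^\star(y)=\sup_x(xy-\Phi(x))$. The Luxemburg norm is $\|f\|_\Phi=\inf\{\lambda>0:\int\Phi(|f|/\lambda)\,d\mu\le1\}$. *)

(* Defs.v *)
From HB Require Import structures.
From mathcomp Require Import all_boot all_order all_algebra.
From mathcomp Require Import all_classical all_reals all_analysis.
Set Implicit Arguments.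
Unset Strict Implicit.
Unset Printing Implicit Defensive.
Import Order.TTheory GRing.Theory Num.Theory.
Import numFieldNormedType.Exports.
Local Open Scope classical_set_scope.
Local Open Scope ring_scope.

Section Defs.
Context {R : realType}.

(* Lebesgue integral over R^n = 'rV[R]_n of a [0,+oo]-valued function,
   computed as the iterated one-dimensional Lebesgue integral
   (equal to the integral against n-dimensional Lebesgue measure for
   nonnegative measurable integrands, by Tonelli). *)
Fixpoint leb_int (n : nat) : ('rV[R]_n -> \bar R) -> \bar R :=
  match n return ('rV[R]_n -> \bar R) -> \bar R with
  | 0%N => fun g => g 0
  | m.+1 => fun g =>
      (\int[@lebesgue_measure R]_(t in [set: R])
         leb_int (fun y : 'rV[R]_m => g (row_mx (\row_(_ < 1) t) y)))%E
  end.

Fixpoint iter_derive (n : nat) (vs : seq 'rV[R]_n) (f : 'rV[R]_n -> R) :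
    'rV[R]_n -> R :=
  match vs with
  | [::] => f
  | v :: vs' => iter_derive vs' (fun x => derive f x v)
  end.

Definition smooth (n : nat) (f : 'rV[R]_n -> R) :=
  forall (vs : seq 'rV[R]_n) (x : 'rV[R]_n), differentiable (iter_derive vs f) x.

Definition Zconst (n : nat) (V : 'rV[R]_n -> R) : \bar R :=
  leb_int (fun x => (expR (- V x))%:E).

(* \int g d mu  for mu = Z^{-1} e^{-V} dx and g >= 0 *)
Definition mu_int (n : nat) (V : 'rV[R]_n -> R) (g : 'rV[R]_n -> R) : \bar R :=
  (leb_int (fun x => (g x * expR (- V x))%:E) * ((fine (Zconst V))^-1)%:E)%E.

Definition grad_sq (n : nat) (f : 'rV[R]_n -> R) (x : 'rV[R]_n) : R :=
  \sum_(i < n) (derive f x (delta_mx 0 i)) ^+ 2.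

Definition locally_lipschitz (n : nat) (f : 'rV[R]_n -> R) :=
  forall x : 'rV[R]_n, exists e : R, exists L : R, 0 < e /\
    forall y z, ball x e y -> ball x e z -> `|f y - f z| <= L * `|y - z|.

Definition admissible (n : nat) (V : 'rV[R]_n -> R) (f : 'rV[R]_n -> R) :=
  [/\ locally_lipschitz f,
      (mu_int V (fun x => (f x ^+ 2)%R) < +oo)%E &
      (mu_int V (grad_sq f) < +oo)%E].

Definition young (Phi : R -> R) :=
  [/\ forall x, Phi (- x) = Phi x,
      forall x y t, 0 <= t <= 1 ->
        Phi (t * x + (1 - t) * y) <= t * Phi x + (1 - t) * Phi y,
      forall x, 0 <= Phi x,
      Phi 0 = 0 &
      Phi x @[x --> +oo] --> +oo].

Definition legendre_set (Phi : R -> R) (y : R) : set R :=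
  [set x * y - Phi x | x in [set: R]].

Definition legendre (Phi : R -> R) (y : R) : R := sup (legendre_set Phi y).

Definition luxemburg (n : nat) (V : 'rV[R]_n -> R) (Phi : R -> R)
    (f : 'rV[R]_n -> R) : \bar R :=
  ereal_inf [set l%:E | l in
    [set l : R | 0 < l /\ (mu_int V (fun x => Phi (`|f x| / l)%R) <= 1%:E)%E]].

End Defs.

(* Main.v *)
Require Import Defs.
From HB Require Import structures.
From mathcomp Require Import all_boot all_order all_algebra.
From mathcomp Require Import all_classical all_reals all_analysis.
From mathcomp Require Import measurable_realfun ring lra.
Import Order.TTheory GRing.Theory Num.Theory.
Import numFieldNormedType.Exports.
Local Open Scope classical_set_scope.
Local Open Scope ring_scope.
Lemma young_conv0 {R : realType} (Phi : R -> R) (x z : R) : young Phi -> 0 <= x -> 0 < z -> x <= z ->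
  Phi x * z <= x * Phi z.
Proof.
case=> _ conv _ P0 _ x0 z0 xz.
have t01 : 0 <= x / z <= 1.
  by rewrite divr_ge0 ?(ltW z0) //= ler_pdivrMr // mul1r.
have := conv z 0 (x / z) t01; rewrite !mulr0 !addr0 P0 mulr0 addr0.
rewrite mulfVK ?gt_eqF // => h.
by rewrite -ler_pdivlMr // mulrAC.
Qed.
Arguments young_conv0 {R Phi x z}.
Lemma young_mono {R : realType} (Phi : R -> R) (x y : R) : young Phi -> 0 <= x -> x <= y -> Phi x <= Phi y.
Proof.
move=> Y x0 xy.
have [y0|y0] := eqVneq y 0.
  by have -> : x = y by apply/le_anti; rewrite xy y0 x0.
have yp : 0 < y by rewrite lt_def y0 (le_trans x0 xy).
have h := young_conv0 Y x0 yp xy.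
have P0 : 0 <= Phi y by case: Y.
rewrite -(ler_pM2r yp); apply: (le_trans h).
by rewrite mulrC; apply: ler_wpM2l.
Qed.

Lemma phi_bound {R : realType} (Phi : R -> R) :
  young Phi ->
  (forall y, has_ubound (legendre_set Phi y)) ->
  (legendre Phi x / x ^+ 2) @[x --> +oo] --> +oo ->
  forall M, 0 < M -> exists C, 0 <= C /\ forall x, Phi x <= x ^+ 2 / M + C * `|x|.
Proof.
move=> Y ub gr M M0.
have /cvgryPge /(_ M) [Y0 [Y0r HY0]] := gr.
pose C := Num.max Y0 0.
exists C; split; first by rewrite /C le_max lexx orbT.
have Pge0 x : 0 <= Phi x by case: Y.
have key x : 0 < x -> Phi x <= x ^+ 2 / M + C * x.
  move=> x0.
  pose m := Phi x / x.
  have m0 : 0 <= m by rewrite divr_ge0 // ltW.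
  have Pxm : Phi x = m * x by rewrite /m mulfVK // gt_eqF.
  have lm : legendre Phi m <= x * m.
    apply: ge_sup; first by exists (0 * m - Phi 0), 0.
    move=> w [z _ <-].
    have [zx|xz] := leP z x.
      by rewrite lerBlDr ler_wpDr ?Pge0 // ler_wpM2r.
    have z0 : 0 < z by apply: lt_trans xz.
    have := young_conv0 Y (ltW x0) z0 (ltW xz).
    rewrite Pxm => h.
    have hz : m * z <= Phi z.
      by rewrite -(ler_pM2l x0) mulrA (mulrC x m).
    apply: (le_trans _ (mulr_ge0 (ltW x0) m0)).
    by rewrite subr_le0 mulrC.
  have mb : m <= x / M + C.
    have [mC|Cm] := leP m C.
      by apply: (le_trans mC); rewrite lerDr divr_ge0 // ?ltW.
    have Ym : Y0 < m by apply: le_lt_trans Cm; rewrite /C le_max lexx.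
    have mp : 0 < m by apply: le_lt_trans Cm; rewrite /C le_max lexx orbT.
    have := HY0 _ Ym; rewrite ler_pdivlMr ?exprn_gt0 // => hM.
    have : M * m ^+ 2 <= x * m := le_trans hM lm.
    rewrite expr2 mulrA ler_pM2r // => hM2.
    have mxM : m <= x / M by rewrite ler_pdivlMr // mulrC.
    by apply: (le_trans mxM); rewrite lerDl /C le_max lexx orbT.
  rewrite Pxm; apply: le_trans (ler_wpM2r (ltW x0) mb) _.
  by rewrite mulrDl expr2 mulrAC.
move=> x.
have [x0|x0|->] := ltgtP x 0; last first.
- by case: Y => _ _ _ -> _; rewrite expr0n /= mul0r normr0 mulr0 addr0.
- by rewrite gtr0_norm //; apply: key.
have -> : Phi x = Phi (- x) by case: Y => ->.
by rewrite ltr0_norm // -sqrrN; apply: key; rewrite oppr_gt0.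
Qed.
Section Meas.
Context {R : realType}.
Local Open Scope ereal_scope.

Lemma leb_ge0 m (g : 'rV[R]_m -> \bar R) : (forall x, 0 <= g x) -> 0 <= leb_int g.
Proof.
elim: m g => [|m IH] g g0 /=; first exact: g0.
by apply: integral_ge0 => t _; apply: IH.
Qed.

Definition GoodE m (g : 'rV[R]_m -> \bar R) := forall d (S : measurableType d)
  (b : 'I_m -> S -> R), (forall i, measurable_fun setT (b i)) ->
  measurable_fun setT (fun s => g (\row_i b i s)).

Definition MeasF m d (T : measurableType d) (F : T -> 'rV[R]_m -> \bar R) :=
  forall d' (S : measurableType d') (phi : S -> T) (b : 'I_m -> S -> R),
  measurable_fun setT phi -> (forall i, measurable_fun setT (b i)) ->
  measurable_fun setT (fun s => F (phi s) (\row_i b i s)).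

Arguments MeasF {m d T}.
Arguments GoodE {m}.

Definition consb m (S : Type) (a : S -> R) (b : 'I_m -> S -> R) : 'I_(1 + m) -> S -> R :=
  fun i s => match fintype.split i with inl _ => a s | inr j => b j s end.

Arguments consb {m S}.

Lemma row_consb m S (a : S -> R) (b : 'I_m -> S -> R) s :
  \row_i consb a b i s = row_mx (\row_(_ < 1) a s) (\row_j b j s).
Proof. by apply/rowP => i; rewrite !mxE /consb; case: fintype.split => j; rewrite mxE. Qed.

Lemma meas_consb m d (S : measurableType d) (a : S -> R) (b : 'I_m -> S -> R) :
  measurable_fun setT a -> (forall j, measurable_fun setT (b j)) ->
  forall i, measurable_fun setT (consb a b i).
Proof. by move=> ma mb i; rewrite /consb; case: fintype.split. Qed.

Arguments meas_consb {m d S a b}.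

Lemma leb_meas m : forall d (T : measurableType d) (F : T -> 'rV[R]_m -> \bar R),
  (forall t y, 0 <= F t y) -> MeasF F -> measurable_fun setT (fun t => leb_int (F t)).
Proof.
elim: m => [|m IH] d T F F0 MF /=.
  have := MF _ _ id (fun _ _ => 0%R) (@measurable_id _ _ setT) (fun _ => measurable_cst _).
  by rewrite (thinmx0 (\row__ 0%R)).
pose f := fun p : T * R => leb_int (fun y => F p.1 (row_mx (\row_(_ < 1) p.2) y)).
have mf : measurable_fun setT f.
  apply: IH => [p y|d' S phi b mphi mb]; first exact: F0.
  have ma : measurable_fun setT (snd \o phi) := measurableT_comp measurable_snd mphi.
  have h := MF _ _ (fst \o phi) (consb (snd \o phi) b)
    (measurableT_comp measurable_fst mphi) (meas_consb ma mb).
  rewrite (_ : (fun s => _) = (fun s => F ((fst \o phi) s) (\row_i consb (snd \o phi) b i s))) //.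
  by apply/funext => s; rewrite row_consb.
have f0 p : 0 <= f p by apply: leb_ge0 => y; exact: F0.
exact: (@measurable_fun_fubini_tonelli_F _ _ _ _ R lebesgue_measure f mf f0).
Qed.

Lemma good_slice m (g : 'rV[R]_(1 + m) -> \bar R) (s : R) :
  GoodE g -> GoodE (fun y : 'rV_m => g (row_mx (\row_(_ < 1) s) y)).
Proof.
move=> Gg d S b mb.
have h := Gg _ _ (consb (cst s) b) (meas_consb (measurable_cst s) mb).
rewrite (_ : (fun s => _) = (fun s0 => g (\row_i consb (cst s) b i s0))) //.
by apply/funext => s0; rewrite row_consb.
Qed.

Lemma good_measF m (g : 'rV[R]_(1 + m) -> \bar R) :
  GoodE g -> MeasF (fun (s : R) (y : 'rV_m) => g (row_mx (\row_(_ < 1) s) y)).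
Proof.
move=> Gg d S phi b mphi mb.
have h := Gg _ _ (consb phi b) (meas_consb mphi mb).
rewrite (_ : (fun s => _) = (fun s0 => g (\row_i consb phi b i s0))) //.
by apply/funext => s0; rewrite row_consb.
Qed.

Lemma good_slice_meas m (g : 'rV[R]_(1 + m) -> \bar R) : (forall x, 0 <= g x) ->
  GoodE g -> measurable_fun setT
    (fun s : R => leb_int (fun y : 'rV_m => g (row_mx (\row_(_ < 1) s) y))).
Proof.
move=> g0 Gg; apply: leb_meas; last exact: good_measF.
by move=> *; exact: g0.
Qed.

Lemma leb_le m (g h : 'rV[R]_m -> \bar R) : (forall x, 0 <= g x) ->
  (forall x, g x <= h x) -> GoodE g -> GoodE h -> leb_int g <= leb_int h.
Proof.
elim: m g h => [|m IH] g h g0 gh Gg Gh /=; first exact: gh.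
have h0 x : 0 <= h x by apply: le_trans (gh x).
apply: ge0_le_integral => //.
- by move=> t _; apply: leb_ge0 => y; exact: g0.
- exact: good_slice_meas.
- exact: good_slice_meas.
- move=> t _; apply: IH => //; try exact: good_slice.
  all: by move=> y; exact: g0.
Qed.

Lemma leb_add m (g h : 'rV[R]_m -> \bar R) : (forall x, 0 <= g x) ->
  (forall x, 0 <= h x) -> GoodE g -> GoodE h ->
  leb_int (fun x => g x + h x) = leb_int g + leb_int h.
Proof.
elim: m g h => [|m IH] g h g0 h0 Gg Gh //=.
rewrite -ge0_integralD //.
- apply: eq_integral => t _; apply: IH; try exact: good_slice.
  + by move=> y; exact: g0.
  + by move=> y; exact: h0.
- by move=> t _; apply: leb_ge0 => y; exact: g0.
- exact: good_slice_meas.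
- by move=> t _; apply: leb_ge0 => y; exact: h0.
- exact: good_slice_meas.
Qed.

Lemma leb_scale m (g : 'rV[R]_m -> \bar R) (k : R) : (forall x, 0 <= g x) ->
  (0 <= k)%R -> GoodE g ->
  leb_int (fun x => k%:E * g x) = k%:E * leb_int g.
Proof.
elim: m g => [|m IH] g g0 k0 Gg //=.
rewrite -ge0_integralZl //.
- apply: eq_integral => t _; apply: IH => //; try exact: good_slice.
  all: try by move=> y; exact: g0.
- exact: good_slice_meas.
- by move=> t _; apply: leb_ge0 => y; exact: g0.
Qed.
End Meas.
Lemma ball_rowE {R : realType} m (c y : 'rV[R]_m) r :
  ball c r y <-> (0 < r /\ forall j, `|c 0 j - y 0 j| < r).
Proof.
split.
  by move=> [r0 h]; split => // j; have := h 0 j.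
by move=> [r0 h]; split => // i j; rewrite (ord1 i); apply: h.
Qed.
Lemma ke_lem {R : realType} (e : R) (k : nat) : 0 < e -> 2 / e < k.+1%:R ->
  k.+1%:R^-1 + k.+1%:R^-1 <= e.
Proof.
move=> e0; rewrite ltr_pdivrMr // => h.
rewrite -mulr2n -[_ *+ 2]mulr_natl ler_pdivrMr ?ltr0n //.
by rewrite mulrC ltW.
Qed.
Section Cont.
Context {R : realType}.

Definition GoodR m (g : 'rV[R]_m -> R) := forall d (S : measurableType d)
  (b : 'I_m -> S -> R), (forall i, measurable_fun setT (b i)) ->
  measurable_fun setT (fun s => g (\row_i b i s)).

Lemma ball_pre m d (S : measurableType d) (b : 'I_m -> S -> R) (c : 'rV[R]_m) r :
  (forall i, measurable_fun setT (b i)) -> 0 < r ->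
  measurable [set s | ball c r (\row_i b i s)].
Proof.
move=> mb r0.
have -> : [set s | ball c r (\row_i b i s)] =
   \bigcap_(j in [set: 'I_m]) ((fun s => `|c 0 j - b j s|) @^-1` `]-oo, r[).
  apply/seteqP; split => s.
    move/ball_rowE => [_ h] j _ /=; rewrite in_itv /=.
    by have := h j; rewrite mxE.
  move=> h; apply/ball_rowE; split => // j.
  by have := h j I; rewrite /= in_itv /= mxE.
apply: fin_bigcap_measurable; first exact: finite_finset.
move=> j _; rewrite -[X in measurable X]setTI.
have mf : measurable_fun setT (fun s => `|c 0 j - b j s|).
  have h1 := measurable_funB (measurable_cst (c 0 j)) (mb j).
  have h2 := measurableT_comp (@normr_measurable R setT) h1.
  exact h2.
exact: mf measurableT _ (measurable_itv _).
Qed.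

Lemma open_pre m d (S : measurableType d) (b : 'I_m -> S -> R) (U : set 'rV[R]_m) :
  (forall i, measurable_fun setT (b i)) -> open U -> measurable [set s | U (\row_i b i s)].
Proof.
move=> mb oU.
pose B (p : 'rV[rat]_m * nat) := ball (map_mx ratr p.1 : 'rV[R]_m) (p.2.+1%:R^-1).
pose F p := if `[< B p `<=` U >] then [set s | B p (\row_i b i s)] else set0.
have -> : [set s | U (\row_i b i s)] = \bigcup_p F p.
  apply/seteqP; split => s /=; last first.
    by move=> [p _]; rewrite /F; case: asboolP => // sub Bp; exact: sub.
  move=> Ux; set x := \row_i b i s in Ux *.
  have /nbhs_ballP [e e0 sub] := oU x Ux.
  pose k := Num.trunc (2 / e).
  have kp : 0 < k.+1%:R^-1 :> R by rewrite invr_gt0 ltr0n.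
  have ke : k.+1%:R^-1 + k.+1%:R^-1 <= e.
    exact: ke_lem (truncnS_gt (2 / e)).
  have qex : forall j, exists q : rat, `|x 0 j - ratr q| < k.+1%:R^-1.
    move=> j.
    have [z [Bz [q _ qz]]] := dense_rat (ex_intro _ (x 0 j) (ballxx (x 0 j) kp)) (ball_open (x 0 j) (k.+1%:R^-1)).
    by exists q; rewrite qz.
  case: (choice qex) => qf Hq.
  pose q := \row_j qf j.
  exists (q, k) => //.
  have xB : B (q, k) x.
    apply/ball_rowE; split => // j; move: (Hq j); rewrite !mxE => hq.
    by rewrite distrC.
  have sB : B (q, k) `<=` U.
    move=> z Bz; apply: sub.
    have := ball_triangle (ball_sym xB) Bz.
    exact: (le_ball ke).
  by rewrite /F asboolT.
apply: countable_bigcupT_measurable; first exact: countableP.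
move=> p; rewrite /F; case: asboolP => _; last exact: measurable0.
by apply: ball_pre => //; rewrite invr_gt0 ltr0n.
Qed.
End Cont.
Arguments open_pre {R m d S b U}.
Lemma cont_good {R : realType} m (g : 'rV[R]_m -> R) : continuous g -> GoodR m g.
Proof.
move=> cg d S b mb.
apply: (measurability (@RGenOInfty.G R)) => [|/= _ [_ [r ->] <-]].
  exact: RGenOInfty.measurableE.
rewrite setTI.
have := open_pre mb (open_comp (fun x _ => cg x) (@rray_open _ R r)).
by [].
Qed.
Arguments GoodE {R m}.
Arguments MeasF {R m d T}.
Arguments consb {R m S}.
Arguments meas_consb {R m d S a b}.
Section Mu.
Context {R : realType}.

Lemma goodR_comp m (g : 'rV[R]_m -> R) (h : R -> R) :
  GoodR m g -> measurable_fun setT h -> GoodR m (fun x => h (g x)).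
Proof. by move=> Gg mh d S b mb; exact: measurableT_comp mh (Gg _ _ _ mb). Qed.

Lemma goodR_mul m (g h : 'rV[R]_m -> R) :
  GoodR m g -> GoodR m h -> GoodR m (fun x => g x * h x).
Proof. by move=> Gg Gh d S b mb; exact: measurable_funM (Gg _ _ _ mb) (Gh _ _ _ mb). Qed.

Lemma goodR_EFin m (g : 'rV[R]_m -> R) : GoodR m g -> GoodE (fun x => (g x)%:E).
Proof. by move=> Gg d S b mb; apply/measurable_EFinP; exact: Gg. Qed.

Arguments goodR_mul {m g h}.
Arguments goodR_comp {m g h}.
Arguments goodR_EFin {m g}.

Lemma ll_cont m (f : 'rV[R]_m -> R) : locally_lipschitz f -> continuous f.
Proof.
move=> lf x; have [e [L [e0 H]]] := lf x.
move=> A /nbhs_ballP [eps /= eps0 sub].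
have L1 : 0 < `|L| + 1 by rewrite ltr_wpDl.
pose del := Num.min e (eps / (`|L| + 1)).
have del0 : 0 < del by rewrite lt_min e0 divr_gt0.
apply/nbhs_ballP; exists del => // y By.
apply: sub.
have Bye : ball x e y by apply: le_ball By; rewrite ge_min lexx.
have h := H x y (ballxx x e0) Bye.
have hxy : `|x - y| < del by rewrite -ball_normE in By.
rewrite -ball_normE /=; apply: (le_lt_trans h).
have hd : del <= eps / (`|L| + 1) by rewrite ge_min lexx orbT.
apply: (le_lt_trans (ler_wpM2r (normr_ge0 _) (ler_norm L))).
apply: (@le_lt_trans _ _ ((`|L| + 1) * `|x - y|)).
  by rewrite ler_wpM2r // lerDl.
by rewrite mulrC -ltr_pdivlMr // (lt_le_trans hxy hd).
Qed.

Lemma c_ge0 n (V : 'rV[R]_n -> R) : 0 <= (fine (Zconst V))^-1.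
Proof. by rewrite invr_ge0 fine_ge0 // leb_ge0 // => x; rewrite lee_fin expR_ge0. Qed.

Lemma goodR_E n (V : 'rV[R]_n -> R) : continuous V -> GoodR n (fun x => expR (- V x)).
Proof.
move=> cV; apply: (@goodR_comp n V (fun y => expR (- y)) (cont_good _ _ cV)).
exact: measurableT_comp (@measurable_expR R) (@oppr_measurable R setT).
Qed.

Lemma mu_ge0 n (V : 'rV[R]_n -> R) g : (forall x, 0 <= g x) -> (0 <= mu_int V g)%E.
Proof.
move=> g0; rewrite /mu_int; apply: mule_ge0; first apply: leb_ge0 => x.
  by rewrite lee_fin mulr_ge0 // expR_ge0.
by rewrite lee_fin c_ge0.
Qed.

Lemma mu_le n (V : 'rV[R]_n -> R) g h : continuous V -> GoodR n g -> GoodR n h ->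
  (forall x, 0 <= g x) -> (forall x, g x <= h x) -> (mu_int V g <= mu_int V h)%E.
Proof.
move=> cV Gg Gh g0 gh; rewrite /mu_int; apply: lee_wpmul2r; first by rewrite lee_fin c_ge0.
apply: leb_le.
- by move=> x; rewrite lee_fin mulr_ge0 // expR_ge0.
- by move=> x; rewrite lee_fin ler_wpM2r // expR_ge0.
- by apply: goodR_EFin; apply: goodR_mul => //; exact: goodR_E.
- by apply: goodR_EFin; apply: goodR_mul => //; exact: goodR_E.
Qed.

Lemma goodE_scale m (g : 'rV[R]_m -> \bar R) k : GoodE g -> GoodE (fun x => k%:E * g x)%E.
Proof. by move=> Gg d S b mb; exact: measurable_funeM (Gg _ _ _ mb). Qed.

Arguments goodE_scale {m g}.

Lemma mu_lin n (V : 'rV[R]_n -> R) g h k1 k2 : continuous V -> GoodR n g -> GoodR n h ->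
  (forall x, 0 <= g x) -> (forall x, 0 <= h x) -> 0 <= k1 -> 0 <= k2 ->
  mu_int V (fun x => k1 * g x + k2 * h x) = (k1%:E * mu_int V g + k2%:E * mu_int V h)%E.
Proof.
move=> cV Gg Gh g0 h0 k10 k20.
have E0 x : 0 <= expR (- V x) by rewrite expR_ge0.
have G1 := goodR_EFin (goodR_mul Gg (goodR_E _ _ cV)).
have G2 := goodR_EFin (goodR_mul Gh (goodR_E _ _ cV)).
have n1 x : (0 <= (g x * expR (- V x))%:E)%E by rewrite lee_fin mulr_ge0.
have n2 x : (0 <= (h x * expR (- V x))%:E)%E by rewrite lee_fin mulr_ge0.
have n1' x : (0 <= k1%:E * (g x * expR (- V x))%:E)%E by rewrite mule_ge0.
have n2' x : (0 <= k2%:E * (h x * expR (- V x))%:E)%E by rewrite mule_ge0.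
rewrite /mu_int.
rewrite (_ : (fun x => ((k1 * g x + k2 * h x) * expR (- V x))%:E) =
  (fun x => (k1%:E * (g x * expR (- V x))%:E) + (k2%:E * (h x * expR (- V x))%:E))%E); last first.
  by apply/funext => x; rewrite -!EFinM -EFinD mulrDl !mulrA.
rewrite (leb_add _ _ _ n1' n2' (goodE_scale k1 G1) (goodE_scale k2 G2)).
rewrite !leb_scale // muleDl //; first by rewrite !muleA.
rewrite ge0_adde_def // inE; apply: mule_ge0 => //; apply: leb_ge0 => //.
Qed.
End Mu.
Arguments goodR_mul {R m g h}.
Arguments goodR_comp {R m g h}.
Arguments goodR_EFin {R m g}.

Section Lux.
Context {R : realType}.

Lemma goodR_add n (g h : 'rV[R]_n -> R) : GoodR n g -> GoodR n h -> GoodR n (fun x => g x + h x).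
Proof. by move=> Gg Gh d S b mb; exact: measurable_funD (Gg _ _ _ mb) (Gh _ _ _ mb). Qed.

Lemma goodR_scale n (g : 'rV[R]_n -> R) k : GoodR n g -> GoodR n (fun x => k * g x).
Proof. by move=> Gg d S b mb; exact: measurable_funM (measurable_cst k) (Gg _ _ _ mb). Qed.

Arguments goodR_add {n g h}.
Arguments goodR_scale {n g}.

Lemma lux_le n (V : 'rV[R]_n -> R) (Phi : R -> R) (f : 'rV[R]_n -> R) (lam : R) : 0 < lam ->
  (mu_int V (fun x => Phi (`|f x| / lam)%R) <= 1%:E)%E -> (luxemburg V Phi f <= lam%:E)%E.
Proof. by move=> l0 h; apply: ereal_inf_lbound; exists lam. Qed.

Lemma lux_ge0 n (V : 'rV[R]_n -> R) (Phi : R -> R) (f : 'rV[R]_n -> R) : (0 <= luxemburg V Phi f)%E.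
Proof. by apply: le_ereal_inf_tmp => _ [l [l0 _] <-]; rewrite lee_fin ltW. Qed.

Lemma goodR_phi n (f : 'rV[R]_n -> R) (Phi : R -> R) (lam : R) : young Phi -> 0 < lam -> continuous f ->
  GoodR n (fun x => Phi (`|f x| / lam)).
Proof.
move=> Y l0 cf.
pose psi y := Phi (Num.max y 0).
have -> : (fun x => Phi (`|f x| / lam)) = (fun x => psi (`|f x| / lam)).
  by apply/funext => x; rewrite /psi max_l // divr_ge0 // ltW.
have mpsi : measurable_fun setT psi.
  apply: nondecreasing_measurable => // a b ab; rewrite /psi.
  apply: young_mono => //; first by rewrite le_max lexx orbT.
  by rewrite ge_max !le_max ab lexx !orbT.
have mg : measurable_fun setT (fun y : R => `|y| / lam).
  exact: measurable_funM (@normr_measurable R setT) (measurable_cst _).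
exact: (goodR_comp (cont_good _ _ cf) (measurableT_comp mpsi mg)).
Qed.

Lemma phi_int_bound n (V : 'rV[R]_n -> R) (Phi : R -> R) (f : 'rV[R]_n -> R) (M C lam : R) :
  continuous V -> young Phi -> continuous f -> 0 < M -> 0 <= C ->
  (forall x, Phi x <= x ^+ 2 / M + C * `|x|) -> 0 < lam ->
  (mu_int V (fun x => Phi (`|f x| / lam)%R) <=
   (1 / (M * lam ^+ 2))%:E * mu_int V (fun x => f x ^+ 2)%R + (C / lam)%:E * mu_int V (fun x => `|f x|)%R)%E.
Proof.
move=> cV Y cf M0 C0 hP l0.
have Gf := cont_good _ _ cf.
have Gf2 : GoodR n (fun x => f x ^+ 2).
  rewrite (_ : (fun x => f x ^+ 2) = (fun x => f x * f x)); first exact (goodR_mul Gf Gf).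
  by apply/funext => x; rewrite expr2.
have Gfa : GoodR n (fun x => `|f x|).
  exact: (goodR_comp Gf (@normr_measurable R setT)).
rewrite -(mu_lin _ _ _ _ _ _ cV Gf2 Gfa); last 4 first.
- by move=> x; rewrite sqr_ge0.
- by move=> x.
- by rewrite divr_ge0 // ?mulr_gt0 ?exprn_gt0 // ltW // mulr_gt0 // exprn_gt0.
- by rewrite divr_ge0 // ltW.
apply: mu_le => //.
- exact: goodR_phi.
- exact: goodR_add (goodR_scale _ Gf2) (goodR_scale _ Gfa).
- by move=> x; case: Y => _ _ ->.
- move=> x; apply: (le_trans (hP _)).
  have -> : (`|f x| / lam) ^+ 2 / M = 1 / (M * lam ^+ 2) * `|f x| ^+ 2.
    by field; rewrite ?gt_eqF.
  rewrite real_normK ?num_real // ger0_norm ?divr_ge0 //; last exact: ltW.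
  by rewrite le_eqVlt; apply/orP; left; apply/eqP; ring.
Qed.
End Lux.
Lemma final_real {R : realType} (a g i l b C s r : R) : 0 <= a -> 0 <= g -> 0 <= i -> 0 <= l ->
  0 <= b -> 0 <= C -> 0 <= s -> 0 <= r -> (8 * b + 8) * s ^+ 2 = 2 * a -> l <= s + 2 * C * i ->
  a <= r / 2 * g + b * (l * l) -> a <= r * g + (16 * b * C ^+ 2 + 1) * (i * i).
Proof.
move=> a0 g0 i0 l0 b0 C0 s0 r0 hs hl ha.
have t0 : 0 <= s + 2 * C * i by rewrite addr_ge0 // !mulr_ge0.
have hlt : l * l <= (s + 2 * C * i) * (s + 2 * C * i) by rewrite ler_pM.
have hq := sqr_ge0 (s - 2 * C * i).
have h1 : l * l <= 2 * s ^+ 2 + 8 * C ^+ 2 * (i * i).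
  apply: (le_trans hlt); rewrite -subr_ge0; apply: (le_trans hq); rewrite le_eqVlt; apply/orP; left; apply/eqP; ring.
have h2 : 4 * b * s ^+ 2 <= a by nra.
have h3 : b * (l * l) <= a / 2 + 8 * b * C ^+ 2 * (i * i).
  have := ler_wpM2l b0 h1; move=> h; apply: (le_trans h).
  rewrite mulrDr; lra.
have h4 : 0 <= b * C ^+ 2 * (i * i) by rewrite !mulr_ge0 // sqr_ge0.
have h5 : 0 <= i * i by rewrite mulr_ge0.
lra.
Qed.
Theorem theorem3p3 (R : realType) (n : nat) (V : 'rV[R]_n -> R)
  (Phi : R -> R) (r0 : R) (beta : R -> R) :
  smooth V ->
  (Zconst V < +oo)%E ->
  young Phi ->
  (forall y, has_ubound (legendre_set Phi y)) ->
  young (legendre Phi) ->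
  (legendre Phi x / x ^+ 2) @[x --> +oo] --> +oo ->
  young (fun x => legendre Phi (Num.sqrt `|x|)) ->
  0 <= r0 ->
  (forall r, r0 < r -> 0 <= beta r) ->
  (forall r, r0 < r -> forall f, admissible V f ->
     (mu_int V (fun x => (f x ^+ 2)%R)
        <= r%:E * mu_int V (grad_sq f)
           + (beta r)%:E * (luxemburg V Phi f * luxemburg V Phi f))%E) ->
  exists beta' : R -> R,
    (forall r, 8 * r0 < r -> 0 <= beta' r) /\
    (forall r, 8 * r0 < r -> forall f, admissible V f ->
     (mu_int V (fun x => (f x ^+ 2)%R)
        <= r%:E * mu_int V (grad_sq f)
           + (beta' r)%:E * (mu_int V (fun x => `|f x|%R) * mu_int V (fun x => `|f x|%R)))%E).
Proof.
move=> sV Zfin Y ub Yst gr Ysq r00 b0 HOSP.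
have cV : continuous V := fun x => differentiable_continuous (sV [::] x).
have hC : forall M : R, exists C, 0 <= C /\ (0 < M -> forall x, Phi x <= x ^+ 2 / M + C * `|x|).
  move=> M; have [M0|M0] := ltP 0 M.
    by have [C [C0 hC]] := phi_bound _ Y ub gr _ M0; exists C; split => //.
  by exists 0; split.
have [Cf HCf] := choice hC.
pose K r := 16 * beta (r / 2) * Cf (8 * beta (r / 2) + 8) ^+ 2 + 1.
have r2 r : 8 * r0 < r -> r0 < r / 2 by move=> h; lra.
exists K; split.
  move=> r hr; have := b0 _ (r2 _ hr); have := (HCf (8 * beta (r / 2) + 8)).1 => h1 h2.
  by rewrite /K addr_ge0 // !mulr_ge0 // sqr_ge0.
move=> r hr f af.
have rb := r2 _ hr.
set b := beta (r / 2); have bb0 : 0 <= b := b0 _ rb.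
set M := 8 * b + 8; have M0 : 0 < M by rewrite /M; lra.
have [C0 hCx] := HCf M; have hPhi := hCx M0; set C := Cf M in C0 hPhi hCx.
have rpos : 0 <= r by lra.
have Kr : K r = 16 * b * C ^+ 2 + 1 by [].
rewrite Kr.
have af' := af; case: af' => lf fA fG.
have cf := ll_cont _ _ lf.
have A0 : (0 <= mu_int V (fun x => (f x ^+ 2)%R))%E := mu_ge0 _ _ _ (fun x => sqr_ge0 _).
have G0 : (0 <= mu_int V (grad_sq f))%E.
  by apply: mu_ge0 => x; apply: sumr_ge0 => i _; exact: sqr_ge0.
have I0 : (0 <= mu_int V (fun x => `|f x|%R))%E := mu_ge0 _ _ _ (fun x => normr_ge0 _).
have [a [Ae a0]] : exists a, mu_int V (fun x => (f x ^+ 2)%R) = a%:E /\ 0 <= a.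
  exists (fine (mu_int V (fun x => (f x ^+ 2)%R))); split; first by rewrite fineK // ge0_fin_numE.
  by rewrite fine_ge0.
have [g [Ge g0]] : exists g, mu_int V (grad_sq f) = g%:E /\ 0 <= g.
  exists (fine (mu_int V (grad_sq f))); split; first by rewrite fineK // ge0_fin_numE.
  by rewrite fine_ge0.
have [Ifin|Inf] := boolP (mu_int V (fun x => `|f x|%R) \is a fin_num); last first.
  move: Inf; rewrite ge0_fin_numE // -leNgt leye_eq => /eqP ->.
  rewrite Ae Ge mulyy gt0_muley ?lte_fin; last by rewrite ltr_pwDr // !mulr_ge0 // sqr_ge0.
  by rewrite addey // leey.
have [i [Ie i0]] : exists i, mu_int V (fun x => (`|f x|)%R) = i%:E /\ 0 <= i.
  exists (fine (mu_int V (fun x => (`|f x|)%R))); split; first by rewrite fineK.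
  by rewrite fine_ge0.
pose s := Num.sqrt (2 * a / M).
have s0 : 0 <= s by exact: sqrtr_ge0.
have hs : M * s ^+ 2 = 2 * a.
  rewrite /s sqr_sqrtr; last by rewrite divr_ge0 // ?mulr_ge0 // ltW.
  by field; rewrite gt_eqF.
have Lle : (luxemburg V Phi f <= (s + 2 * C * i)%:E)%E.
  apply/lee_addgt0Pr => eta eta0; rewrite -EFinD.
  set lam := s + 2 * C * i + eta.
  have lam0 : 0 < lam by rewrite /lam ltr_pwDr // addr_ge0 // !mulr_ge0.
  apply: lux_le => //.
  apply: le_trans (phi_int_bound _ _ _ _ _ _ _ cV Y cf M0 C0 hPhi lam0) _.
  rewrite Ae Ie -!EFinM -EFinD lee_fin.
  have slam : s <= lam by rewrite /lam -addrA lerDl addr_ge0 // ?mulr_ge0 // ltW.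
  have hl2 : 2 * a <= M * lam ^+ 2.
    rewrite -hs ler_pM2l // ler_sqr // ?nnegrE //; exact: ltW.
  have h1 : 1 / (M * lam ^+ 2) * a <= 1 / 2.
    rewrite mul1r mulrC ler_pdivrMr ?mulr_gt0 ?exprn_gt0 //; lra.
  have h2 : C / lam * i <= 1 / 2.
    rewrite mulrAC ler_pdivrMr //; rewrite /lam; lra.
  lra.
have L0 := lux_ge0 _ V Phi f.
have [l [Le l0]] : exists l, luxemburg V Phi f = l%:E /\ 0 <= l.
  exists (fine (luxemburg V Phi f)); split; last by rewrite fine_ge0.
  rewrite fineK // ge0_fin_numE //; exact: le_lt_trans Lle (ltey _).
have := HOSP _ rb f af.
rewrite Ae Ge Le Ie -!EFinM -!EFinD !lee_fin => ha.
have hl : l <= s + 2 * C * i by rewrite -lee_fin -Le.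
have ha' : a <= r / 2 * g + b * (l * l) by [].
have hs' : (8 * b + 8) * s ^+ 2 = 2 * a by rewrite -hs.
have := @final_real R a g i l b C s r a0 g0 i0 l0 bb0 C0 s0 rpos hs' hl ha'.
by [].
Qed.
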